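(* Let $t\ge 2$ and let $\mathcal{P}_t$ be the semilattice on $\{0,1,\dots,t\}$ in which $0$ is the greatest element and $1,\dots,t$ are pairwise incomparable (so $i+j=0$ for $i\ne j$ and $i+i=i$). Let $\operatorname{End}^0(\mathcal{P}_t)$ be the set of endomorphisms of $\mathcal{P}_t$ fixing $0$. Then $\operatorname{End}^0(\mathcal{P}_t)$ is a subsemiring of $\operatorname{End}(\mathcal{P}_t)$, this subsemiring is isomorphic to the rook semiring $\mathcal{R}_t$, and every endomorphism in $\operatorname{End}(\mathcal{P}_t)\setminus\operatorname{End}^0(\mathcal{P}_t)$ is a constant map.
   Context: For a semilattice $\mathcal{A}=(A,+)$, $\operatorname{End}(\mathcal{A})$ is the semiring of all maps $\alpha:A\to A$ with $(a+b)\alpha=a\alpha+b\alpha$, under pointwise addition and composition (maps written on the right, $a(\alpha\beta)=(a\alpha)\beta$). A $t\times t$ rook matrix is a $0$-$1$ matrix with at most one entry $1$ in each row and each column. The rook semiring $\mathcal{R}_t$ is the set $R_t$ of all $t\times t$ rook matrices with addition the entrywise (Hadamard) product $a+b=(a_{ij}b_{ij})$ and multiplication the usual matrix product. *)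

(* Defs.v *)
From HB Require Import structures.
From mathcomp Require Import all_boot all_order all_algebra.
Set Implicit Arguments. Unset Strict Implicit. Unset Printing Implicit Defensive.
Import GRing.Theory.
Local Open Scope ring_scope.

Definition padd (t : nat) (i j : 'I_t.+1) : 'I_t.+1 :=
  if i == j then i else ord0.

Definition is_end (t : nat) (f : {ffun 'I_t.+1 -> 'I_t.+1}) : Prop :=
  forall a b : 'I_t.+1, f (padd a b) = padd (f a) (f b).

Definition is_end0 (t : nat) (f : {ffun 'I_t.+1 -> 'I_t.+1}) : Prop :=
  is_end f /\ f ord0 = ord0.

(* Semiring operations on End(P_t): pointwise addition, and composition with
   maps written on the right: a (f g) = (a f) g. *)
Definition end_add (t : nat) (f g : {ffun 'I_t.+1 -> 'I_t.+1})
  : {ffun 'I_t.+1 -> 'I_t.+1} := [ffun a => padd (f a) (g a)].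
Definition end_mul (t : nat) (f g : {ffun 'I_t.+1 -> 'I_t.+1})
  : {ffun 'I_t.+1 -> 'I_t.+1} := [ffun a => g (f a)].

Definition is_rook (t : nat) (A : 'M[int]_t) : Prop :=
  [/\ (forall i j, A i j = 0 \/ A i j = 1),
      (forall i j k, A i j = 1 -> A i k = 1 -> j = k) &
      (forall i k j, A i j = 1 -> A k j = 1 -> i = k)].

Definition rook_add (t : nat) (A B : 'M[int]_t) : 'M[int]_t :=
  \matrix_(i, j) (A i j * B i j).
Definition rook_mul (t : nat) (A B : 'M[int]_t) : 'M[int]_t := A *m B.

(* Main.v *)
Require Import Defs.
From HB Require Import structures.
From mathcomp Require Import all_boot all_order all_algebra.
Local Open Scope ring_scope.
Import GRing.Theory.

Lemma end0P (t : nat) (f : {ffun 'I_t.+1 -> 'I_t.+1}) :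
  is_end0 f <-> f ord0 = ord0 /\ (forall a b, a != b -> f a = f b -> f a = ord0).
Proof.
split.
  move=> [He H0]; split => // a b ab fab.
  have := He a b; rewrite /padd (negbTE ab) H0 fab eqxx => ->; by [].
move=> [H0 H]; split => // a b; rewrite /padd.
case: (eqVneq a b) => [->|ab]; first by rewrite eqxx.
rewrite H0; case: (eqVneq (f a) (f b)) => [e|]; last by [].
by rewrite (H a b ab e).
Qed.

Definition phi (t : nat) (f : {ffun 'I_t.+1 -> 'I_t.+1}) : 'M[int]_t :=
  \matrix_(i, j) (((f (lift ord0 i) == lift ord0 j) : nat)%:R : int).

Lemma b01 (b : bool) : ((b : nat)%:R : int) = 1 <-> b.
Proof. by case: b. Qed.

Lemma b0 (b : bool) : ((b : nat)%:R : int) = 0 <-> ~~ b.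
Proof. by case: b. Qed.

Lemma nl0 (t : nat) (j : 'I_t) : (ord0 == lift ord0 j :> 'I_t.+1) = false.
Proof. exact/negbTE/(@neq_lift t.+1). Qed.
Lemma nl0' (t : nat) (j : 'I_t) : (lift ord0 j == ord0 :> 'I_t.+1) = false.
Proof. by rewrite eq_sym nl0. Qed.

Theorem proposition3p9 (t : nat) (ht : (2 <= t)%N) :
  (* End^0(P_t) is a subsemiring of End(P_t) *)
  ((forall f : {ffun 'I_t.+1 -> 'I_t.+1}, is_end0 f -> is_end f) /\
   (forall f g : {ffun 'I_t.+1 -> 'I_t.+1}, is_end0 f -> is_end0 g -> is_end0 (end_add f g)) /\
   (forall f g : {ffun 'I_t.+1 -> 'I_t.+1}, is_end0 f -> is_end0 g -> is_end0 (end_mul f g))) /\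
  (* End^0(P_t) is isomorphic to the rook semiring R_t *)
  (exists phi : {ffun 'I_t.+1 -> 'I_t.+1} -> 'M[int]_t,
     (forall f : {ffun 'I_t.+1 -> 'I_t.+1}, is_end0 f -> is_rook (phi f)) /\
     (forall f g : {ffun 'I_t.+1 -> 'I_t.+1}, is_end0 f -> is_end0 g -> phi f = phi g -> f = g) /\
     (forall A : 'M[int]_t, is_rook A -> exists2 f, is_end0 f & phi f = A) /\
     (forall f g : {ffun 'I_t.+1 -> 'I_t.+1}, is_end0 f -> is_end0 g ->
        phi (end_add f g) = rook_add (phi f) (phi g)) /\
     (forall f g : {ffun 'I_t.+1 -> 'I_t.+1}, is_end0 f -> is_end0 g ->
        phi (end_mul f g) = rook_mul (phi f) (phi g))) /\
  (* every endomorphism not fixing 0 is constant *)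
  (forall f : {ffun 'I_t.+1 -> 'I_t.+1}, is_end f -> ~ is_end0 f -> exists c, forall a, f a = c).
Proof.
split; [split; [|split]|split].
- by move=> f [].
- move=> f g /end0P [f0 Hf] /end0P [g0 Hg]; apply/end0P; split.
    by rewrite ffunE f0 g0 /padd eqxx.
  move=> a b ab; rewrite !ffunE /padd.
  case: (eqVneq (f a) (g a)) => [ea|na]; case: (eqVneq (f b) (g b)) => [eb|nb] //.
  by move=> e; apply: (Hf a b ab); rewrite e.
- move=> f g /end0P [f0 Hf] /end0P [g0 Hg]; apply/end0P; split.
    by rewrite ffunE f0 g0.
  move=> a b ab; rewrite !ffunE.
  case: (eqVneq (f a) (f b)) => [e|ne]; first by rewrite (Hf a b ab e) g0.
  exact: (Hg _ _ ne).


- exists (@phi t); split; [|split; [|split; [|split]]].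
  + move=> f /end0P [f0 Hf]; split.
    * move=> i j; rewrite mxE; case: (_ == _); [right|left]; by [].
    * move=> i j k; rewrite !mxE => /b01/eqP -> /b01/eqP; exact: lift_inj.
    * move=> i k j; rewrite !mxE => /b01/eqP e1 /b01/eqP e2.
      case: (eqVneq i k) => [//|ik].
      have := Hf (lift ord0 i) (lift ord0 k).
      rewrite (inj_eq (@lift_inj _ ord0)) ik e1 e2 => /(_ isT erefl) e.
      by have := neq_lift ord0 j; rewrite e eqxx.
  + move=> f g /end0P [f0 Hf] /end0P [g0 Hg] e; apply/ffunP => a.
    have E i j : (f (lift ord0 i) == lift ord0 j) = (g (lift ord0 i) == lift ord0 j).
      have := congr1 (fun M : 'M[int]_t => M i j) e; rewrite !mxE.
      by case: (_ == _); case: (_ == _).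
    case: (unliftP ord0 a) => [i ->|->]; last by rewrite f0 g0.
    case: (unliftP ord0 (f (lift ord0 i))) => [j ej|ej].
      by have := E i j; rewrite ej eqxx => /esym/eqP ->.
    case: (unliftP ord0 (g (lift ord0 i))) => [k ek|ek]; last by rewrite ej ek.
    by have := E i k; rewrite ek eqxx ej => /eqP.

  + move=> A [A01 Arow Acol].
    pose f : {ffun 'I_t.+1 -> 'I_t.+1} := [ffun a => if unlift ord0 a is Some i then
        (if [pick j | A i j == 1] is Some j then lift ord0 j else ord0) else ord0].
    have fl i : f (lift ord0 i) = if [pick j | A i j == 1] is Some j then lift ord0 j else ord0.
      by rewrite ffunE liftK.
    have f0 : f ord0 = ord0 by rewrite ffunE unlift_none.
    exists f.
      apply/end0P; split => // a b ab.
      case: (unliftP ord0 a) => [i ea|->]; last by [].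
      case: (unliftP ord0 b) => [k eb|->]; last by rewrite f0.
      rewrite ea eb !fl.
      case: pickP => [j /eqP Aj|]; case: pickP => [j' /eqP Aj'|] //.
      move/lift_inj => jj; subst j'.
      by move: ab; rewrite ea eb (Acol _ _ _ Aj Aj') eqxx.
    apply/matrixP => i j; rewrite mxE fl.
    case: pickP => [j' /eqP Aj'|N].
      rewrite (inj_eq (@lift_inj _ ord0)).
      case: (eqVneq j' j) => [e|ne] /=; first by rewrite -e Aj'.
      case: (A01 i j) => // e; by case/eqP: ne; apply: (Arow _ _ _ Aj' e).
    rewrite nl0.
    case: (A01 i j) => // e; by have := N j; rewrite e eqxx.
  + move=> f g _ _; apply/matrixP => i j; rewrite !mxE ffunE /padd.
    case: (eqVneq (f (lift ord0 i)) (g (lift ord0 i))) => [->|ne].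
      by case: (_ == _).
    rewrite nl0.
    case: (eqVneq (f (lift ord0 i)) (lift ord0 j)) => [e1|]; 
      case: (eqVneq (g (lift ord0 i)) (lift ord0 j)) => [e2|] //=.
    by move: ne; rewrite e1 e2 eqxx.
  + move=> f g /end0P [f0 Hf] /end0P [g0 Hg]; apply/matrixP => i k.
    rewrite !mxE ffunE.
    case: (unliftP ord0 (f (lift ord0 i))) => [j0 ej|ej].
      rewrite ej (bigD1 j0) //= !mxE ej eqxx mul1r big1 ?addr0 // => j nj.
      rewrite mxE ej (inj_eq (@lift_inj _ ord0)) eq_sym (negbTE nj); by rewrite mul0r.
    rewrite ej g0 nl0 big1 // => j _.
    by rewrite mxE ej nl0 mul0r.
- move=> f He N.
  have f0 : f ord0 != ord0.
    by apply/eqP => e; apply: N.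
  exists (f ord0) => a.
  pose b : 'I_t.+1 := if a == ord0 then ord_max else ord0.
  have ab : a != b.
    rewrite /b; case: (eqVneq a ord0) => [->|//].
    by rewrite -(inj_eq val_inj) /= eq_sym -lt0n (leq_trans _ ht).
  move: (He a b) f0; rewrite /padd (negbTE ab).
  by case: (eqVneq (f a) (f b)) => [_ ->|_ ->]; rewrite ?eqxx.
Qed.
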